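(* Let $G$ be a countable group, and let $X$ be a proper metric space equipped with a $G$-action by isometries. If the $G$-action on $X$ is proper and properly proximal, then $G$ is properly proximal.
   Context: A sequence $(g_n)$ in $G$ escapes every compact subspace of $X$ if for some (equivalently any) $x\in X$, $(g_nx)$ eventually leaves every compact subset. The $G$-action on $X$ is properly proximal if there exist finitely many compact metrizable $G$-spaces $K_1,\dots,K_\ell$, none carrying a $G$-invariant probability measure, and diffuse (atomless) probability measures $\eta_i$ on $K_i$, such that for every sequence $(g_n)$ escaping every compact subspace of $X$, there exist $i$ and a subsequence $(g_{\sigma(n)})$ with $g_{\sigma(n)}h\eta_i-g_{\sigma(n)}\eta_i\to0$ weak-$*$ for every $h\in G$. A countable group $G$ is properly proximal if there exist finitely many compact $G$-spaces $K_1,\dots,K_\ell$ and diffuse probability measures $\eta_i$ on $K_i$ such that no $K_i$ carries a $G$-invariant probability measure, and for every nonprincipal ultrafilter $\omega$ on $G$ there exists $i$ such that for every $h\in G$, $\lim_{g\to\omega}((gh)\eta_i-g\eta_i)=0$ weak-$*$. *)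

(* Defs.v *)
From HB Require Import structures.
From mathcomp Require Import all_boot all_order all_algebra.
From mathcomp Require Import all_classical all_reals all_analysis.
Set Implicit Arguments. Unset Strict Implicit. Unset Printing Implicit Defensive.
Import Order.TTheory GRing.Theory Num.Theory.
Import numFieldNormedType.Exports.
Local Open Scope classical_set_scope.
Local Open Scope ring_scope.

Record cgroup := CGroup {
  gcar :> Type;
  gmul : gcar -> gcar -> gcar;
  gone : gcar;
  ginv : gcar -> gcar;
  gmulA : forall x y z, gmul x (gmul y z) = gmul (gmul x y) z;
  gmul1g : forall x, gmul gone x = x;
  gmulVg : forall x, gmul (ginv x) x = gone;
  gcountable : exists f : gcar -> nat, injective f }.

Definition is_action (G : cgroup) (T : Type) (a : G -> T -> T) :=
  (forall x, a (gone G) x = x) /\ (forall g h x, a (gmul g h) x = a g (a h x)).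

(* a compact (Hausdorff) G-space; G discrete, so continuity = each g acts continuously *)
Record cGspace (G : cgroup) := CGspace {
  csp : ptopologicalType;
  cact : G -> csp -> csp;
  cact_action : is_action cact;
  cact_cont : forall g, continuous (cact g);
  csp_compact : compact [set: csp];
  csp_hausdorff : hausdorff_space csp }.

Record cmGspace (R : realType) (G : cgroup) := CMGspace {
  msp : pseudoPMetricType R;
  mact : G -> msp -> msp;
  mact_action : is_action mact;
  mact_cont : forall g, continuous (mact g);
  msp_compact : compact [set: msp];
  msp_hausdorff : hausdorff_space msp }.

Definition cm_to_c (R : realType) (G : cgroup) (K : cmGspace R G) : cGspace G :=
  @CGspace G (msp K) (@mact R G K) (@mact_action R G K) (@mact_cont R G K)
    (@msp_compact R G K) (@msp_hausdorff R G K).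

Definition borel (T : ptopologicalType) := g_sigma_algebraType (@open T).

(* probability measures on a compact Hausdorff space: Radon (inner regular by
   compact sets) Borel probability measures *)
Definition radon (R : realType) (T : ptopologicalType)
  (mu : probability (borel T) R) :=
  forall A : set (borel T), measurable A ->
    mu A = ereal_sup [set mu C | C in [set C : set T | compact C /\ C `<=` A]].

Definition diffuse (R : realType) (T : ptopologicalType)
  (mu : probability (borel T) R) := forall x : T, mu [set x] = 0%E.

Definition has_invariant_prob (R : realType) (G : cgroup) (K : cGspace G) :=
  exists mu : probability (borel (csp K)) R, radon mu /\
    forall (g : G) (A : set (borel (csp K))), measurable A ->
      mu (@cact _ K g @^-1` A) = mu A.

(* integral of f against the translated measure g.mu, i.e.
   \int f d(g mu) = \int f(g x) dmu(x) *)
Definition gint (R : realType) (G : cgroup) (K : cGspace G)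
  (mu : probability (borel (csp K)) R) (g : G) (f : csp K -> R) : R :=
  Rintegral mu setT (fun x => f (@cact _ K g x)).

(* X is a metric space: its pseudometric structure is induced by a metric d *)
Definition is_metric (R : realType) (X : pseudoPMetricType R) (d : X -> X -> R) :=
  (forall x y, 0 <= d x y) /\ (forall x y, d x y = 0 -> x = y) /\
  (forall x y, d x y = d y x) /\ (forall x y z, d x z <= d x y + d y z) /\
  (forall x (e : R) y, ball x e y <-> d x y < e).

Definition proper_metric (R : realType) (X : pseudoPMetricType R) (d : X -> X -> R) :=
  forall (x : X) (r : R), compact [set y | d x y <= r].

Definition isometric_action (R : realType) (G : cgroup) (X : pseudoPMetricType R)
  (d : X -> X -> R) (act : G -> X -> X) :=
  forall g x y, d (act g x) (act g y) = d x y.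

Definition proper_action (G : cgroup) (X : ptopologicalType) (act : G -> X -> X) :=
  forall C : set X, compact C ->
    finite_set [set g : G | exists x, C x /\ C (act g x)].

Definition escapes (G : cgroup) (X : ptopologicalType) (act : G -> X -> X)
  (gs : nat -> G) :=
  exists x : X, forall C : set X, compact C ->
    \forall n \near \oo, ~ C (act (gs n) x).

Definition properly_proximal_action (R : realType) (G : cgroup)
  (X : ptopologicalType) (act : G -> X -> X) :=
  exists (l : nat) (K : 'I_l -> cmGspace R G)
         (eta : forall i, probability (borel (msp (K i))) R),
    (forall i, ~ has_invariant_prob R (cm_to_c (K i))) /\
    (forall i, radon (eta i)) /\
    (forall i, diffuse (eta i)) /\
    forall gs : nat -> G, escapes act gs ->
      exists (i : 'I_l) (s : nat -> nat), (forall n, (s n < s n.+1)%N) /\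
        forall (h : G) (f : msp (K i) -> R), continuous f ->
          (fun n => gint (K := cm_to_c (K i)) (eta i) (gmul (gs (s n)) h) f
                    - gint (K := cm_to_c (K i)) (eta i) (gs (s n)) f)
            @ \oo --> (0 : R).

Definition nonprincipal_ultrafilter (G : cgroup) (w : set_system G) :=
  w setT /\ ~ w set0 /\
  (forall A B, w A -> w B -> w (A `&` B)) /\
  (forall A B, A `<=` B -> w A -> w B) /\
  (forall A, w A \/ w (~` A)) /\
  (forall g : G, ~ w [set g]).

Definition properly_proximal_group (R : realType) (G : cgroup) :=
  exists (l : nat) (K : 'I_l -> cGspace G)
         (eta : forall i, probability (borel (csp (K i))) R),
    (forall i, ~ has_invariant_prob R (K i)) /\
    (forall i, radon (eta i)) /\
    (forall i, diffuse (eta i)) /\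
    forall w : set_system G, nonprincipal_ultrafilter w ->
      exists i : 'I_l,
        forall (h : G) (f : csp (K i) -> R), continuous f ->
          (fun g : G => gint (eta i) (gmul g h) f - gint (eta i) g f)
            @ w --> (0 : R).

(* Main.v *)
Require Import Defs.
From HB Require Import structures.
From mathcomp Require Import all_boot all_order all_algebra.
From mathcomp Require Import all_classical all_reals all_analysis.
Import Order.TTheory GRing.Theory Num.Theory.
Import numFieldNormedType.Exports.
Local Open Scope classical_set_scope.
Local Open Scope ring_scope.

Lemma dxx (R : realType) (X : pseudoPMetricType R) (d : X -> X -> R) :
  is_metric d -> forall x, d x x = 0.
Proof.
move=> [d0 [_ [_ [_ db]]]] x; apply/eqP; rewrite eq_le d0 andbT.
rewrite leNgt; apply/negP => hx.
have := (db x (d x x) x).1 (ballxx x hx); by rewrite ltxx.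
Qed.

Lemma ball_open_d (R : realType) (X : pseudoPMetricType R) (d : X -> X -> R) :
  is_metric d -> forall x (r : R), open [set y | d x y < r].
Proof.
move=> [d0 [_ [dsym [dtri db]]]] x r; rewrite openE => y /= hy.
rewrite /interior; apply/nbhs_ballP; exists (r - d x y); first by rewrite /= subr_gt0.
move=> z /db hz /=.
have := dtri x y z; move=> h; apply: (le_lt_trans h); by rewrite -ltrBrDl.
Qed.

Lemma compact_bnd (R : realType) (X : pseudoPMetricType R) (d : X -> X -> R) :
  is_metric d -> forall (x : X) (C : set X), compact C ->
  exists M : R, forall y, C y -> d x y <= M.
Proof.
move=> hd x C; rewrite compact_cover => /(_ nat setT (fun n : nat => [set y | d x y < n%:R])).
case.
- by move=> n _; apply: ball_open_d.
- move=> y _; exists (Num.truncn (d x y)).+1 => //=; exact: truncnS_gt.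
move=> D' _ hc; exists (\max_(n <- finmap.enum_fset D') n)%:R => y /hc [n /= nD hn].
apply/ltW/(lt_le_trans hn); rewrite ler_nat.
by apply: (@leq_bigmax_seq _ _ xpredT (fun n => n)).
Qed.
Lemma npu_avoid (G : cgroup) (w : set_system G) :
  nonprincipal_ultrafilter w -> forall (S A : set G), finite_set S -> w A ->
  exists g, A g /\ ~ S g.
Proof.
move=> [wT [w0 [wI [wS [wU wnp]]]]] S A fS wA.
have [f finj] := gcountable G.
have /finite_seqP [s hs] : finite_set (f @` S) by apply: finite_image.
have key : forall t : seq nat, w [set g | f g \notin t].
  elim=> [|a t IH].
    by apply: wS wT => g.
  have wa : w (~` [set g | f g = a]).
    case: (wU [set g | f g = a]) => // hP; exfalso.
    have [g0 hg0] := filter_ex_subproof w0 hP.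
    apply: (wnp g0); apply: wS hP => g /= hg; apply: finj; by rewrite hg hg0.
  apply: wS (wI _ _ wa IH) => g [/= h1 h2].
  by rewrite in_cons negb_or h2 andbT; apply/eqP.
have [g [hA hg]] := filter_ex_subproof w0 (wI _ _ wA (key s)).
exists g; split => // hSg.
have : (f @` S) (f g) by exists g.
by rewrite hs /= (negbTE hg).
Qed.
Lemma npu_bigcap (G : cgroup) (w : set_system G) (l : nat) (B : 'I_l -> set G) :
  nonprincipal_ultrafilter w -> (forall i, w (B i)) ->
  w [set g | forall i, B i g].
Proof.
move=> [wT [w0 [wI [wS [wU wnp]]]]] wB.
suff : forall k, w [set g | forall i : 'I_l, (i < k)%N -> B i g].
  move=> /(_ l); apply: wS => g /= h i; exact: h.
elim=> [|k IH]; first by apply: wS wT => g _ [].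
case: (ltnP k l) => kl.
  apply: wS (wI _ _ IH (wB (Ordinal kl))) => g [/= h1 h2] i.
  rewrite ltnS leq_eqVlt => /orP [/eqP ik|]; last exact: h1.
  by have -> : i = Ordinal kl by apply: val_inj.
apply: wS IH => g /= h i ik; apply: h; exact: leq_trans (ltn_ord i) kl.
Qed.

Theorem lemma1p3 (R : realType) (G : cgroup) (X : pseudoPMetricType R)
  (d : X -> X -> R) (act : G -> X -> X) :
  is_metric d -> proper_metric d ->
  is_action act -> isometric_action d act ->
  proper_action act -> properly_proximal_action R act ->
  properly_proximal_group R G.
Proof.
move=> hd dprop _ _ hprop [l [K [eta [Hinv [Hrad [Hdiff Hpp]]]]]].
exists l, (fun i => cm_to_c (K i)), eta.
split; first exact: Hinv. split; first exact: Hrad. split; first exact: Hdiff.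
move=> w hw; apply: contrapT => Hno.
have hB : forall i : 'I_l, exists B : set G, w B /\
   exists (h : G) (f : msp (K i) -> R), continuous f /\ exists A : set R,
     nbhs (0 : R) A /\ forall g, B g ->
     ~ A (gint (K := cm_to_c (K i)) (eta i) (gmul g h) f
          - gint (K := cm_to_c (K i)) (eta i) g f).
  move=> i.
  have : ~ (forall (h : G) (f : msp (K i) -> R), continuous f ->
          (fun g : G => gint (K := cm_to_c (K i)) (eta i) (gmul g h) f
             - gint (K := cm_to_c (K i)) (eta i) g f) @ w --> (0 : R)).
    by move=> H; apply: Hno; exists i.
  move=> /existsNP [h] /existsNP [f] /not_implyP [fc] /existsNP [A] /not_implyP [hA nwA].
  exists (~` ((fun g : G => gint (K := cm_to_c (K i)) (eta i) (gmul g h) f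
             - gint (K := cm_to_c (K i)) (eta i) g f) @^-1` A)).
  split.
    by case: hw => [_ [_ [_ [_ [wU _]]]]]; case: (wU (((fun g : G => gint (K := cm_to_c (K i)) (eta i) (gmul g h) f
             - gint (K := cm_to_c (K i)) (eta i) g f) @^-1` A))).
  by exists h, f; split => //; exists A; split.
have [B hBB] := choice hB.
have wI := @npu_bigcap _ _ _ B hw (fun i => (hBB i).1).
pose x0 : X := point.
pose F (n : nat) := [set g : G | exists x, d x0 x <= n%:R /\ d x0 (act g x) <= n%:R].
have fF : forall n, finite_set (F n).
  move=> n; apply: (hprop [set y | d x0 y <= n%:R]); exact: dprop.
have hgs : forall n : nat, exists g, (forall i, B i g) /\ ~ F n g.
  move=> n; have [g [h1 h2]] := @npu_avoid _ _ hw (F n) _ (fF n) wI; by exists g.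
have [gs hgs'] := choice hgs.
have esc : escapes act gs.
  exists x0 => C cC.
  have [M hM] := @compact_bnd _ _ _ hd x0 C cC.
  near=> n => hC.
  apply: (hgs' n).2; exists x0; split.
    by rewrite (@dxx _ _ _ hd).
  apply: (le_trans (hM _ hC)).
  near: n; exact: nbhs_infty_ger.
have [i [s [_ hcv]]] := Hpp gs esc.
have [_ [h [f [fc [A [hA hnA]]]]]] := hBB i.
have [n hn] := @filter_ex _ (\oo : set_system nat) _ _ (hcv h f fc A hA).
exact: (hnA (gs (s n)) ((hgs' (s n)).1 i)).
Unshelve. all: end_near.
Qed.
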